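(* Suppose the standing assumptions (1)–(5) below hold. Let the updated dataset $\mathcal{D}'=(\mathbf{Z}',\mathbf{y})$ arise from $\mathcal{D}$ by any single or batch removal request, each request being either a feature removal (zeroing the entry of a node in some $\mathbf{x}_i$) or an entire node removal (zeroing that entry of $\mathbf{x}_i$ and the corresponding row and column of $\mathbf{S}_i$), with the embeddings of affected graphs recomputed by the GST and all other embeddings unchanged. Then the updated model $\mathbf{w}'=\mathbf{w}^\star+\mathbf{H}_{\mathbf{w}^\star}^{-1}\Delta$ satisfies $$\|\nabla L(\mathbf{w}',\mathcal{D}')\|\leq\gamma_2F\,\|\mathbf{Z}'\|\,\|\mathbf{H}_{\mathbf{w}^\star}^{-1}\Delta\|\,\|\mathbf{Z}'\mathbf{H}_{\mathbf{w}^\star}^{-1}\Delta\|,\qquad F=\sqrt{\sum_{l=0}^{L-1}B^{2l}},$$ where $\mathbf{Z}'$ is the data matrix of $\mathcal{D}'$ and $B$ is the upper frame constant of the graph wavelets used in the GST.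
   Context: Setting (graph classification). There are $n$ training graphs $\mathcal{G}_1,\dots,\mathcal{G}_n$. Graph $\mathcal{G}_i$ has $g_i$ nodes, a symmetric adjacency matrix $\mathbf{S}_i\in\mathbb{R}^{g_i\times g_i}$ (the graph shift operator), a node signal $\mathbf{x}_i\in\mathbb{R}^{g_i}$ (one scalar feature per node) and a label $y_i$. Graph scattering transform (GST). Fix positive integers $J,L$ and wavelet kernel functions $h_1,\dots,h_J:\mathbb{R}\to\mathbb{R}$. For a symmetric $\mathbf{S}=\mathbf{V}\mathbf{\Lambda}\mathbf{V}^T$ with eigenvalues $\lambda_1,\dots,\lambda_g$, set $\mathbf{H}_j(\mathbf{S})=\mathbf{V}\,\mathrm{diag}(h_j(\lambda_1),\dots,h_j(\lambda_g))\mathbf{V}^T$. The wavelets form a frame: there are constants $0<A\le B$ with $A^2\|\mathbf{x}\|^2\le\sum_{j=1}^J\|\mathbf{H}_j(\mathbf{S})\mathbf{x}\|^2\le B^2\|\mathbf{x}\|^2$ for all $\mathbf{x}$ (for all shift operators considered). Let $\rho$ be the entrywise absolute value. For a path $p=(j_1,\dots,j_l)$ with $j_k\in\{1,\dots,J\}$ and $0\le l\le L-1$, define $\Phi_{()}(\mathbf{S},\mathbf{x})=\mathbf{x}$ and $\Phi_{(j_1,\dots,j_l)}(\mathbf{S},\mathbf{x})=\rho\big(\mathbf{H}_{j_l}(\mathbf{S})\Phi_{(j_1,\dots,j_{l-1})}(\mathbf{S},\mathbf{x})\big)$, and the scalar coefficient $\phi_p(\mathbf{S},\mathbf{x})=U\Phi_p(\mathbf{S},\mathbf{x})$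 with the averaging operator $U=\frac{1}{g}\mathbf{1}^T$ ($g$ the number of nodes). The embedding $\Phi(\mathbf{S},\mathbf{x})\in\mathbb{R}^d$, $d=\sum_{l=0}^{L-1}J^l$, is the concatenation of all $\phi_p(\mathbf{S},\mathbf{x})$. Set $\mathbf{z}_i=\Phi(\mathbf{S}_i,\mathbf{x}_i)$, let $\mathbf{Z}\in\mathbb{R}^{n\times d}$ have rows $\mathbf{z}_i^T$, and $\mathcal{D}=(\mathbf{Z},\mathbf{y})$. Learning and update. $\ell(s,y)$ is convex and twice differentiable in $s$; $\ell'$, $\ell''$ denote derivatives in $s$, and $\nabla$, $\nabla^2$ denote gradient/Hessian in $\mathbf{w}$. For a dataset $\mathcal{D}=(\mathbf{Z},\mathbf{y})$, $L(\mathbf{w},\mathcal{D})=\sum_{i=1}^n\big(\ell(\mathbf{w}^T\mathbf{z}_i,y_i)+\frac{\lambda}{2}\|\mathbf{w}\|^2\big)$ with $\lambda>0$, and $\mathbf{w}^\star=\arg\min_{\mathbf{w}}L(\mathbf{w},\mathcal{D})$. For the updated dataset $\mathcal{D}'$, set $\mathbf{H}_{\mathbf{w}^\star}=\nabla^2L(\mathbf{w}^\star,\mathcal{D}')$ and $\Delta=\nabla L(\mathbf{w}^\star,\mathcal{D})-\nabla L(\mathbf{w}^\star,\mathcal{D}')$. Norms are $\ell_2$ for vectors and operator norm for matrices. Standing assumptions: there are constants $C_1,C_2,\gamma_1,\gamma_2$ such that for every embedding $\mathbf{z}_i$ (of $\mathcal{D}$ or $\mathcal{D}'$) and every $\mathbf{w}\in\mathbb{R}^d$: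 (1) $\|\nabla\ell(\mathbf{w}^T\mathbf{z}_i,y_i)\|\le C_1$; (2) $|\ell'(\mathbf{w}^T\mathbf{z}_i,y_i)|\le C_2$; (3) $\ell'$ is $\gamma_1$-Lipschitz; (4) $\ell''$ is $\gamma_2$-Lipschitz; (5) the signals (before and after removal) satisfy $|[\mathbf{x}_i]_j|\le1$ for all $i$ and all $j\in\{1,\dots,g_i\}$. *)

(* Defs.v *)
From HB Require Import structures.
From mathcomp Require Import all_boot all_order all_algebra.
From mathcomp Require Import all_classical all_reals all_analysis.
Set Implicit Arguments. Unset Strict Implicit. Unset Printing Implicit Defensive.
Import Order.TTheory GRing.Theory Num.Theory.
Import numFieldNormedType.Exports.
Local Open Scope classical_set_scope.
Local Open Scope ring_scope.

Section GST.
Variable R : realType.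

Definition vnorm m (v : 'cV[R]_m) : R := Num.sqrt (\sum_(k < m) v k 0 ^+ 2).

Definition dot m (u v : 'cV[R]_m) : R := \sum_(k < m) u k 0 * v k 0.

Definition opnorm m k (A : 'M[R]_(m, k)) : R :=
  sup [set vnorm (A *m v) | v in [set v : 'cV[R]_k | vnorm v <= 1]].

Definition grad d (f : 'cV[R]_d -> R) (w : 'cV[R]_d) : 'cV[R]_d :=
  \col_(k < d) derive f w (delta_mx k 0).
Definition hess d (f : 'cV[R]_d -> R) (w : 'cV[R]_d) : 'M[R]_d :=
  \matrix_(k < d, m < d)
     derive (fun u => derive f u (delta_mx m 0)) w (delta_mx k 0).

Definition spec_decomp g (S V : 'M[R]_g) (lam : 'rV[R]_g) : Prop :=
  V^T *m V = 1%:M /\ S = V *m diag_mx lam *m V^T.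

Definition wav g (h : R -> R) (V : 'M[R]_g) (lam : 'rV[R]_g) : 'M[R]_g :=
  V *m diag_mx (\row_k h (lam 0 k)) *m V^T.

(** Scattering paths (j_1,...,j_l), 0 <= l <= L-1, j_k in {1..J} (here 'I_J). *)
Definition pathT (J L : nat) := {l : 'I_L & l.-tuple 'I_J}.

Definition Phi g J (hs : 'I_J -> R -> R) (V : 'M[R]_g) (lam : 'rV[R]_g)
    (x : 'cV[R]_g) (p : seq 'I_J) : 'cV[R]_g :=
  foldl (fun acc j => map_mx (fun r => `|r|) (wav (hs j) V lam *m acc)) x p.

Definition phi g J (hs : 'I_J -> R -> R) (V : 'M[R]_g) (lam : 'rV[R]_g)
    (x : 'cV[R]_g) (p : seq 'I_J) : R :=
  (g%:R)^-1 * \sum_(v < g) Phi hs V lam x p v 0.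

(** Embedding dimension d = #paths = sum_(l<L) J^l. *)
Definition gdim (J L : nat) : nat := #|predT : pred (pathT J L)|.

Definition gst g J L (hs : 'I_J -> R -> R) (V : 'M[R]_g) (lam : 'rV[R]_g)
    (x : 'cV[R]_g) : 'cV[R]_(gdim J L) :=
  \col_k phi hs V lam x (tval (tagged (@enum_val (pathT J L) predT k))).

Definition datamx n d (z : 'I_n -> 'cV[R]_d) : 'M[R]_(n, d) :=
  \matrix_(i < n, k < d) z i k 0.

Definition Loss (Y : Type) n d (l : R -> Y -> R) (lambda : R)
    (z : 'I_n -> 'cV[R]_d) (y : 'I_n -> Y) (w : 'cV[R]_d) : R :=
  \sum_(i < n) (l (dot w (z i)) (y i) + lambda / 2 * vnorm w ^+ 2).

(** Removal requests on one graph: [F] = nodes whose feature is zeroed,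
    [N] = nodes removed (feature zeroed and row/column of S zeroed). *)
Definition remove_x g (F N : {set 'I_g}) (x : 'cV[R]_g) : 'cV[R]_g :=
  \col_j (if j \in F :|: N then 0 else x j 0).
Definition remove_S g (N : {set 'I_g}) (S : 'M[R]_g) : 'M[R]_g :=
  \matrix_(a, b) (if (a \in N) || (b \in N) then 0 else S a b).

End GST.

(* Main.v *)
Require Import Defs.
From HB Require Import structures.
From mathcomp Require Import all_boot all_order all_algebra.
From mathcomp Require Import all_classical all_reals all_analysis.
From mathcomp Require Import ring lra.
Import Order.TTheory GRing.Theory Num.Theory.
Import numFieldNormedType.Exports.
Local Open Scope ring_scope.
Set Implicit Arguments. Unset Strict Implicit. Unset Printing Implicit Defensive.
Section Calc.
Variable R : realType.

Lemma dir_is_derive d (f : 'cV[R]_d -> R) (x v : 'cV[R]_d) (phi : R -> R) (D : R) :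
  (forall h, phi h = f (h *: v + x)) -> is_derive (0:R) (1:R) phi D -> is_derive x v f D.
Proof.
move=> Hphi [dphi vphi].
have E : (fun h : R => h^-1 *: ((f \o shift x) (h *: v) - f x)) =
   (fun h : R => h^-1 *: ((phi \o shift 0) (h *: 1) - phi 0)).
  apply/funext => h /=; rewrite !Hphi scale0r add0r addr0.
  by rewrite [h *: (1:R)]mulr1.
apply: DeriveDef; first by rewrite /derivable E.
by rewrite /derive E.
Qed.

Lemma is_derive_aff (f df : R -> R) c e :
  (forall s : R, is_derive s (1:R) f (df s)) ->
  is_derive (0:R) (1:R) (fun h => f (c + h * e)) (df c * e).
Proof.
move=> Hf.
have Hg : is_derive (0:R) 1 (fun h : R => c + h * e) e.
  have -> : (fun h : R => c + h * e) = cst c + e \*: id.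
    by apply/funext => h /=; rewrite mulrC.
  have H1 := @is_derive_cst R R R c 0 1.
  have H2 := is_deriveZ e (@is_derive_id R R 0 1).
  have H3 := is_deriveD H1 H2.
  by move: H3; rewrite add0r /= [e *: (1:R)]mulr1.
have -> : (fun h => f (c + h * e)) = f \o (fun h : R => c + h * e) by [].
have dg : derivable (fun h : R => c + h * e) 0 1 by case: Hg.
have df' : derivable f ((fun h : R => c + h * e) 0) 1.
  by rewrite /= mul0r addr0; case: (Hf c).
apply: DeriveDef.
  apply/derivable1_diffP; apply: differentiable_comp; exact/derivable1_diffP.
rewrite -derive1E derive1_comp // !derive1E.
rewrite /= mul0r addr0.
by rewrite (@derive_val _ _ _ _ _ _ _ (Hf c)) (@derive_val _ _ _ _ _ _ _ Hg).
Qed.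

Lemma deriv_nonpos (f : R -> R) (D : R) : is_derive (0:R) (1:R) f D -> f 0 = 0 ->
  (forall t, 0 < t < 1 -> f t <= 0) -> D <= 0.
Proof.
move=> [fdrv <-] f0 fneg.
rewrite ['D_1 f 0]cvg_at_rightE //.
apply: limr_le.
  rewrite -(cvg_at_rightE (fun h : R => h^-1 *: ((f \o shift 0) _ - f 0))) //.
  apply: cvg_trans fdrv; apply: cvg_app.
  move=> A [e egt0 Ae]; exists e => // z ze zgt0; apply: Ae => //.
  exact/lt0r_neq0.
near=> h; apply: mulr_ge0_le0.
  by rewrite invr_ge0; apply: ltW; near: h; exists 1 => /=.
rewrite f0 subr0 /= [_ *: (1:R)]mulr1 addr0; apply: fneg.
near: h; exists 1 => //= z zlt zgt.
rewrite zgt /=; move: zlt; rewrite /ball_ /= sub0r normrN.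
by apply: le_lt_trans; apply: ler_norm.
Unshelve. all: by end_near. Qed.

End Calc.
Section Convex.
Variable R : realType.

Lemma is_derive_lin (c K : R) :
  is_derive (0:R) (1:R) (fun h : R => c + h * K) K.
Proof.
have := @is_derive_aff R (fun s => s) (fun _ => 1) c K (fun s => @is_derive_id R R s 1).
by rewrite mul1r.
Qed.

Lemma tangent_ineq (l dl : R -> R) :
  (forall (a b t : R), 0 <= t <= 1 -> l (t * a + (1 - t) * b) <= t * l a + (1 - t) * l b) ->
  (forall s : R, is_derive s (1:R) l (dl s)) ->
  forall a d, dl a * d <= l (a + d) - l a.
Proof.
move=> Hc Hd a d.
set K := l (a + d) - l a.
have H1 := is_derive_aff a d Hd.
have H2 := is_derive_lin (l a) K.
have H3 := is_deriveB H1 H2.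
rewrite -subr_le0; apply: (deriv_nonpos H3) => /=.
  rewrite !fctE /= !mul0r !addr0. lra.
move=> t /andP[t0 t1].
rewrite !fctE /= subr_le0.
have -> : a + t * d = t * (a + d) + (1 - t) * a by ring.
apply: le_trans (Hc _ _ _ _) _; first by rewrite (ltW t0) (ltW t1).
by rewrite /K; lra.
Qed.

Lemma dl_mono (l dl : R -> R) :
  (forall (a b t : R), 0 <= t <= 1 -> l (t * a + (1 - t) * b) <= t * l a + (1 - t) * l b) ->
  (forall s : R, is_derive s (1:R) l (dl s)) ->
  forall a b, a <= b -> dl a <= dl b.
Proof.
move=> Hc Hd a b ab.
have T1 := tangent_ineq Hc Hd a (b - a).
have T2 := tangent_ineq Hc Hd b (a - b).
have E1 : a + (b - a) = b by ring.
have E2 : b + (a - b) = a by ring.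
rewrite E1 in T1; rewrite E2 in T2.
have : (dl a - dl b) * (b - a) <= 0.
  have -> : (dl a - dl b) * (b - a) = dl a * (b - a) + dl b * (a - b) by ring.
  lra.
have [<-|nab] := eqVneq a b; first by rewrite lexx.
have ba : 0 < b - a by rewrite subr_gt0 lt_neqAle nab ab.
move=> H; rewrite -subr_le0.
by rewrite -(pmulr_lle0 _ ba).
Qed.

Lemma ddl_ge0 (dl ddl : R -> R) :
  (forall a b, a <= b -> dl a <= dl b) ->
  (forall s : R, is_derive s (1:R) dl (ddl s)) ->
  forall a, 0 <= ddl a.
Proof.
move=> Hm Hd a.
have H1 := is_derive_aff a 1 Hd.
have H2 := is_derive_lin (dl a) 0.
have H3 := is_deriveB H2 H1.
rewrite -oppr_le0 -[- _]add0r -[ddl a]mulr1; apply: (deriv_nonpos H3).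
  rewrite !fctE /= !mul0r !addr0. lra.
move=> t /andP[t0 t1]; rewrite !fctE /= mulr0 addr0 mulr1 subr_le0.
apply: Hm; lra.
Qed.
End Convex.
Section LossCalc.
Variables (R : realType) (Y : Type) (n d : nat) (l dl ddl : R -> Y -> R) (lambda : R)
  (y : 'I_n -> Y).
Hypothesis Hdl : forall yy (s : R), is_derive s 1 (fun t => l t yy) (dl s yy).
Hypothesis Hddl : forall yy (s : R), is_derive s 1 (fun t => dl t yy) (ddl s yy).

Lemma dot_lin (h : R) (e w zz : 'cV[R]_d) : dot (h *: e + w) zz = dot w zz + h * dot e zz.
Proof.
rewrite /dot mulr_sumr -big_split; apply: eq_bigr => k _; rewrite !mxE /=; ring.
Qed.

Lemma vnorm2 m (w : 'cV[R]_m) : vnorm w ^+ 2 = \sum_k w k 0 ^+ 2.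
Proof. by rewrite /vnorm sqr_sqrtr // sumr_ge0 // => k _; rewrite sqr_ge0. Qed.

Lemma is_derive_sq (s : R) : is_derive s (1:R) (fun s : R => s ^+ 2) (2 * s).
Proof.
have -> : (fun s : R => s ^+ 2) = (id * id : R -> R).
  by apply/funext => t; rewrite fctE expr2.
have H := is_deriveM (@is_derive_id R R s 1) (@is_derive_id R R s 1).
have E : s%:A + s%:A = 2 * s :> R by rewrite [s%:A]mulr1; ring.
by rewrite -E.
Qed.

Lemma sq_phi (w e : 'cV[R]_d) :
  is_derive (0:R) (1:R) (fun h : R => \sum_k (w k 0 + h * e k 0) ^+ 2)
    (\sum_k (2 * w k 0) * e k 0).
Proof.
have -> : (fun h : R => \sum_k (w k 0 + h * e k 0) ^+ 2) =
    \sum_k (fun h : R => (w k 0 + h * e k 0) ^+ 2).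
  by apply/funext => h; rewrite fct_sumE.
apply: is_derive_sum => k.
exact: (is_derive_aff (w k 0) (e k 0) is_derive_sq).
Qed.

Variable z : 'I_n -> 'cV[R]_d.

Definition Dl (w e : 'cV[R]_d) :=
  \sum_(i < n) dl (dot w (z i)) (y i) * dot e (z i) + n%:R * lambda * dot w e.

Lemma Loss_phi (w e : 'cV[R]_d) :
  is_derive (0:R) (1:R) (fun h : R => Loss l lambda z y (h *: e + w)) (Dl w e).
Proof.
have -> : (fun h : R => Loss l lambda z y (h *: e + w)) =
   \sum_(i < n) (fun h : R => l (dot w (z i) + h * dot e (z i)) (y i) +
       lambda / 2 * \sum_k (w k 0 + h * e k 0) ^+ 2).
  apply/funext => h; rewrite fct_sumE /Loss; apply: eq_bigr => i _.
  rewrite dot_lin vnorm2; congr (_ + _ * _); apply: eq_bigr => k _.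
  by rewrite !mxE addrC.
apply: is_derive_eq.
  apply: is_derive_sum => i.
  apply: is_deriveD; first exact: (is_derive_aff _ _ (Hdl (y i))).
  exact: (is_deriveZ (lambda / 2) (sq_phi w e)).
rewrite /Dl big_split /=; congr (_ + _).
rewrite sumr_const card_ord.
have -> : forall x : R, x *+ n = n%:R * x by move=> x; rewrite mulr_natl.
rewrite scaler_sumr /dot !mulr_sumr; apply: eq_bigr => k _.
have sE : forall a b : R, a *: b = a * b by [].
by rewrite sE; field.
Qed.


Lemma Loss_dir (w e : 'cV[R]_d) : is_derive w e (Loss l lambda z y) (Dl w e).
Proof. exact: (dir_is_derive (fun h => erefl) (Loss_phi w e)). Qed.

Lemma dot_delta (k : 'I_d) (u : 'cV[R]_d) : dot (delta_mx k 0) u = u k 0.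
Proof.
rewrite /dot (bigD1 k) //= big1 => [|j /negbTE jk]; rewrite !mxE ?eqxx ?jk /=.
  by rewrite mul1r addr0.
by rewrite mul0r.
Qed.

Lemma dot_deltar (k : 'I_d) (u : 'cV[R]_d) : dot u (delta_mx k 0) = u k 0.
Proof.
rewrite /dot (bigD1 k) //= big1 => [|j /negbTE jk]; rewrite !mxE ?eqxx ?jk /=.
  by rewrite mulr1 addr0.
by rewrite mulr0.
Qed.

Definition Gk (u : 'cV[R]_d) (m : 'I_d) :=
  \sum_(i < n) dl (dot u (z i)) (y i) * z i m 0 + n%:R * lambda * u m 0.

Lemma grad_Loss (w : 'cV[R]_d) : grad (Loss l lambda z y) w = \col_k Gk w k.
Proof.
apply/matrixP => k j; rewrite (ord1 j) !mxE.
rewrite (@derive_val _ _ _ _ _ _ _ (Loss_dir w (delta_mx k 0))) /Dl /Gk.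
rewrite dot_deltar; congr (_ + _); apply: eq_bigr => i _; by rewrite dot_delta.
Qed.

Lemma Gk_phi (w e : 'cV[R]_d) (m : 'I_d) :
  is_derive (0:R) (1:R) (fun h : R => Gk (h *: e + w) m)
    (\sum_(i < n) ddl (dot w (z i)) (y i) * dot e (z i) * z i m 0 + n%:R * lambda * e m 0).
Proof.
have -> : (fun h : R => Gk (h *: e + w) m) =
   \sum_(i < n) (z i m 0 \*: (fun h : R => dl (dot w (z i) + h * dot e (z i)) (y i))) +
   (fun h : R => n%:R * lambda * w m 0 + h * (n%:R * lambda * e m 0)).
  apply/funext => h; rewrite /Gk !fctE fct_sumE; congr (_ + _).
    by apply: eq_bigr => i _; rewrite dot_lin mulrC.
  rewrite !mxE; ring.
have H1 := is_derive_sum (fun i => is_deriveZ (z i m 0) (is_derive_aff (dot w (z i)) (dot e (z i)) (Hddl (y i)))).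
have H2 := is_deriveD H1 (is_derive_lin (n%:R * lambda * w m 0) (n%:R * lambda * e m 0)).
rewrite [X in is_derive _ _ _ X](_ : _ = \sum_(i < n) z i m 0 *: (ddl (dot w (z i)) (y i) * dot e (z i)) +
       n%:R * lambda * e m 0); first exact: H2.
congr (_ + _); apply: eq_bigr => i _.
have sE : forall a b : R, a *: b = a * b by [].
by rewrite sE; ring.
Qed.

Lemma hess_Loss (w : 'cV[R]_d) : hess (Loss l lambda z y) w =
  \matrix_(k, m) (\sum_(i < n) ddl (dot w (z i)) (y i) * z i k 0 * z i m 0
                   + n%:R * lambda * (k == m)%:R).
Proof.
apply/matrixP => k m; rewrite !mxE.
have -> : (fun u => derive (Loss l lambda z y) u (delta_mx m 0)) = (fun u => Gk u m).
  apply/funext => u.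
  by have := grad_Loss u; move/matrixP => /(_ m 0); rewrite !mxE.
have H := @dir_is_derive R d (fun u => Gk u m) w (delta_mx k 0) _ _ (fun h => erefl) (Gk_phi w (delta_mx k 0) m).
rewrite (@derive_val _ _ _ _ _ _ _ H) !mxE eqxx /= eq_sym andbT; congr (_ + _).
by apply: eq_bigr => i _; rewrite dot_delta.
Qed.

Lemma dotN (e u : 'cV[R]_d) : dot (- e) u = - dot e u.
Proof. by rewrite /dot -sumrN; apply: eq_bigr => k _; rewrite mxE mulNr. Qed.

Lemma dotNr (e u : 'cV[R]_d) : dot u (- e) = - dot u e.
Proof. by rewrite /dot -sumrN; apply: eq_bigr => k _; rewrite mxE mulrN. Qed.

Lemma grad_min (w : 'cV[R]_d) :
  (forall u, Loss l lambda z y w <= Loss l lambda z y u) ->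
  forall e, Dl w e = 0.
Proof.
move=> Hmin.
have side : forall e, 0 <= Dl w e.
  move=> e.
  have H1 := is_deriveB (@is_derive_cst R R R (Loss l lambda z y w) 0 1) (Loss_phi w e).
  rewrite -oppr_le0 -[- _]add0r; apply: (deriv_nonpos H1).
    by rewrite !fctE /= scale0r add0r subrr.
  by move=> t _; rewrite !fctE /= subr_le0.
move=> e; apply/eqP; rewrite eq_le side andbT.
have := side (- e); rewrite /Dl.
rewrite dotNr mulrN.
under eq_bigr do rewrite dotN mulrN.
by rewrite sumrN -opprD oppr_ge0.
Qed.

End LossCalc.
Section Remainder.
Variable R : realType.

Lemma mvt_seg (f df : R -> R) (p q : R) :
  (forall s : R, is_derive s (1:R) f (df s)) -> p <= q ->
  exists2 c, p <= c <= q & f q - f p = df c * (q - p).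
Proof.
move=> Hd pq.
have dv : forall s, derivable f s 1 by move=> s; case: (Hd s).
have [c cin E] := MVT_segment pq (fun s _ => Hd s)
   (derivable_within_continuous (i := `[p, q]%R) (fun s _ => dv s)).
by exists c => //; move: cin; rewrite in_itv.
Qed.

Lemma remainder (f df : R -> R) (g2 a h : R) :
  (forall s : R, is_derive s (1:R) f (df s)) ->
  (forall a b, `|df a - df b| <= g2 * `|a - b|) ->
  `|f (a + h) - f a - df a * h| <= g2 * h ^+ 2.
Proof.
move=> Hd Hl.
have g2ge0 : 0 <= g2.
  have := Hl 1 0; rewrite subr0 normr1 mulr1; apply: le_trans; exact: normr_ge0.
have [c cah E] : exists2 c, `|c - a| <= `|h| &
    f (a + h) - f a - df a * h = (df c - df a) * h.
  have [h0|h0] := leP 0 h.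
    have ah : a <= a + h by lra.
    have [c /andP[c1 c2] Ec] := mvt_seg Hd ah.
    exists c; last by rewrite Ec; ring.
    rewrite ger0_norm ?ger0_norm; lra.
  have ah : a + h <= a by lra.
  have [c /andP[c1 c2] Ec] := mvt_seg Hd ah.
  exists c.
    rewrite ler0_norm ?ler0_norm; lra.
  have -> : f (a + h) - f a - df a * h = - (f a - f (a + h)) - df a * h by ring.
  rewrite Ec; ring.
rewrite E normrM.
apply: le_trans (ler_wpM2r (normr_ge0 h) (Hl c a)) _.
rewrite -mulrA ler_wpM2l // -normrM.
rewrite (_ : h ^+ 2 = `|h| * `|h|); last by rewrite -normrM -expr2 ger0_norm ?sqr_ge0.
by rewrite normrM ler_wpM2r.
Qed.

End Remainder.
Section CS.
Variable R : realType.

Lemma prod_sums m k (f : 'I_m -> R) (g : 'I_k -> R) :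
  (\sum_i f i) * (\sum_j g j) = \sum_i \sum_j f i * g j.
Proof. rewrite big_distrl; apply: eq_bigr => i _; by rewrite big_distrr. Qed.

Lemma CS m (a b : 'I_m -> R) :
  (\sum_i a i * b i) ^+ 2 <= (\sum_i a i ^+ 2) * (\sum_i b i ^+ 2).
Proof.
set Sa := \sum_i a i ^+ 2; set Sb := \sum_i b i ^+ 2; set Sab := \sum_i a i * b i.
have key : \sum_i \sum_j (a i * b j - a j * b i) ^+ 2 = 2 * (Sa * Sb - Sab ^+ 2).
  have -> : 2 * (Sa * Sb - Sab ^+ 2) = Sa * Sb + Sb * Sa - 2 * (Sab * Sab) by ring.
  rewrite /Sa /Sb /Sab !prod_sums mulr_sumr -sumrN -!big_split.
  apply: eq_bigr => i _; rewrite mulr_sumr -sumrN -!big_split.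
  apply: eq_bigr => j _ /=; ring.
have : 0 <= 2 * (Sa * Sb - Sab ^+ 2).
  rewrite -key; apply: sumr_ge0 => i _; apply: sumr_ge0 => j _; exact: sqr_ge0.
rewrite pmulr_rge0 // subr_ge0 //.
Qed.

Lemma sum_sq_ge0 m (a : 'I_m -> R) : 0 <= \sum_i a i ^+ 2.
Proof. by apply: sumr_ge0 => i _; exact: sqr_ge0. Qed.

Lemma vnorm_ge0 m (u : 'cV[R]_m) : 0 <= vnorm u.
Proof. exact: sqrtr_ge0. Qed.

Lemma dot_CS m (u v : 'cV[R]_m) : `|dot u v| <= vnorm u * vnorm v.
Proof.
rewrite -sqrtr_sqr /vnorm -sqrtrM ?sum_sq_ge0 //.
by apply: ler_wsqrtr; exact: CS.
Qed.

Lemma dot_sq m (u v : 'cV[R]_m) : dot u v ^+ 2 <= vnorm u ^+ 2 * vnorm v ^+ 2.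
Proof. rewrite !vnorm2; exact: CS. Qed.

End CS.
Section OpNorm.
Variable R : realType.
Local Open Scope classical_set_scope.

Lemma vnormZ m (c : R) (u : 'cV[R]_m) : vnorm (c *: u) = `|c| * vnorm u.
Proof.
rewrite /vnorm -sqrtr_sqr -sqrtrM ?sqr_ge0 // mulr_sumr.
congr (Num.sqrt _); apply: eq_bigr => k _; rewrite mxE; ring.
Qed.

Lemma vnorm0_eq m (u : 'cV[R]_m) : vnorm u = 0 -> u = 0.
Proof.
move=> /eqP; rewrite sqrtr_eq0 => H.
have H0 : \sum_k u k 0 ^+ 2 = 0.
  by apply/eqP; rewrite eq_le H sum_sq_ge0.
apply/matrixP => k j; rewrite (ord1 j) mxE.
have := @psumr_eq0P _ _ _ _ (fun i _ => sqr_ge0 (u i 0)) H0 k isT.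
by move/eqP; rewrite sqrf_eq0 => /eqP.
Qed.

Lemma mul_bound m k (M : 'M[R]_(m, k)) (u : 'cV[R]_k) :
  vnorm (M *m u) <= Num.sqrt (\sum_i \sum_j M i j ^+ 2) * vnorm u.
Proof.
rewrite /vnorm -sqrtrM; last by apply: sumr_ge0 => i _; exact: sum_sq_ge0.
apply: ler_wsqrtr; rewrite big_distrl; apply: ler_sum => i _ /=.
rewrite mxE; exact: (CS (fun j => M i j) (fun j => u j 0)).
Qed.

Definition opset m k (M : 'M[R]_(m, k)) :=
  [set vnorm (M *m v) | v in [set v : 'cV[R]_k | vnorm v <= 1]].

Lemma opset_ub m k (M : 'M[R]_(m, k)) : has_ubound (opset M).
Proof.
exists (Num.sqrt (\sum_i \sum_j M i j ^+ 2)) => _ [v hv <-].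
apply: le_trans (mul_bound M v) _.
rewrite -[X in _ <= X]mulr1; apply: ler_wpM2l => //; exact: sqrtr_ge0.
Qed.

Lemma vnorm_0 m : vnorm (0 : 'cV[R]_m) = 0.
Proof. by rewrite /vnorm big1 ?sqrtr0 // => k _; rewrite mxE expr0n. Qed.

Lemma opnorm_ge0 m k (M : 'M[R]_(m, k)) : 0 <= opnorm M.
Proof.
have := ub_le_sup (opset_ub M); apply.
exists 0; first by rewrite /= vnorm_0 ler01.
by rewrite mulmx0 vnorm_0.
Qed.

Lemma opnorm_bound m k (M : 'M[R]_(m, k)) (u : 'cV[R]_k) :
  vnorm (M *m u) <= opnorm M * vnorm u.
Proof.
have [u0|] := eqVneq (vnorm u) 0.
  by rewrite (vnorm0_eq u0) mulmx0 !vnorm_0 mulr0.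
move=> un0; have upos : 0 < vnorm u by rewrite lt_def un0 vnorm_ge0.
have H : vnorm (M *m ((vnorm u)^-1 *: u)) <= opnorm M.
  apply: (ub_le_sup (opset_ub M)); exists ((vnorm u)^-1 *: u) => //=.
  by rewrite vnormZ ger0_norm ?invr_ge0 ?vnorm_ge0 // mulVf.
rewrite -scalemxAr vnormZ ger0_norm ?invr_ge0 ?vnorm_ge0 // in H.
by rewrite -ler_pdivrMr // mulrC.
Qed.

Lemma dot_tr m k (M : 'M[R]_(m, k)) (u : 'cV[R]_k) (r : 'cV[R]_m) :
  dot u (M^T *m r) = dot (M *m u) r.
Proof.
rewrite /dot.
under eq_bigr do rewrite mxE mulr_sumr.
under [RHS]eq_bigr do rewrite mxE mulr_suml.
rewrite exchange_big; apply: eq_bigr => i _; apply: eq_bigr => j _.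
rewrite mxE; ring.
Qed.

Lemma dot_self m (u : 'cV[R]_m) : dot u u = vnorm u ^+ 2.
Proof. by rewrite vnorm2 /dot; apply: eq_bigr => k _; rewrite expr2. Qed.

Lemma opnorm_tr m k (M : 'M[R]_(m, k)) (r : 'cV[R]_m) :
  vnorm (M^T *m r) <= opnorm M * vnorm r.
Proof.
set u := M^T *m r.
have H : vnorm u ^+ 2 <= (opnorm M * vnorm r) * vnorm u.
  rewrite -dot_self {2}/u dot_tr.
  apply: le_trans (ler_norm _) _; apply: le_trans (dot_CS _ _) _.
  rewrite mulrAC; apply: ler_wpM2r; first exact: vnorm_ge0.
  exact: opnorm_bound.
have [u0|un0] := eqVneq (vnorm u) 0.
  by rewrite u0 mulr_ge0 ?opnorm_ge0 ?vnorm_ge0.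
have upos : 0 < vnorm u by rewrite lt_def un0 vnorm_ge0.
by rewrite expr2 ler_pM2r in H.
Qed.

End OpNorm.
Section GSTBound.
Variables (R : realType) (g J L : nat) (hs : 'I_J -> R -> R) (Vm : 'M[R]_g)
  (lam : 'rV[R]_g) (B : R).
Hypothesis frame : forall v : 'cV[R]_g,
  \sum_(j < J) vnorm (wav (hs j) Vm lam *m v) ^+ 2 <= B ^+ 2 * vnorm v ^+ 2.

Lemma vnorm_abs m (v : 'cV[R]_m) : vnorm (map_mx (fun r => `|r|) v) = vnorm v.
Proof.
rewrite /vnorm; congr (Num.sqrt _); apply: eq_bigr => k _.
by rewrite mxE real_normK // num_real.
Qed.

Lemma Phi_cons x j (p : seq 'I_J) :
  Phi hs Vm lam x (j :: p) = Phi hs Vm lam (map_mx (fun r => `|r|) (wav (hs j) Vm lam *m x)) p.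
Proof. by []. Qed.

Lemma sum_tuple_S l (F : l.+1.-tuple 'I_J -> R) :
  \sum_(t : l.+1.-tuple 'I_J) F t = \sum_(j < J) \sum_(t : l.-tuple 'I_J) F [tuple of j :: t].
Proof.
rewrite pair_big /=.
rewrite (reindex (fun p : 'I_J * l.-tuple 'I_J => [tuple of p.1 :: p.2])) //=.
exists (fun t : l.+1.-tuple 'I_J => (thead t, [tuple of behead t])).
  by move=> [j t] _ /=; congr (_, _); apply: val_inj.
by move=> t _ /=; rewrite [RHS]tuple_eta; apply: val_inj.
Qed.

Lemma level_bound l : forall x : 'cV[R]_g,
  \sum_(t : l.-tuple 'I_J) vnorm (Phi hs Vm lam x t) ^+ 2 <= B ^+ (2 * l) * vnorm x ^+ 2.
Proof.
elim: l => [|l IH] x.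
  rewrite (eq_bigr (fun _ => vnorm x ^+ 2)); last by move=> t _; rewrite tuple0.
  by rewrite sumr_const card_tuple expn0 muln0 expr0 mul1r.
rewrite sum_tuple_S.
apply: (@le_trans _ _ (\sum_(j < J) B ^+ (2 * l) *
     vnorm (map_mx (fun r => `|r|) (wav (hs j) Vm lam *m x)) ^+ 2)).
  by apply: ler_sum => j _; exact: IH.
rewrite -mulr_sumr; under eq_bigr do rewrite vnorm_abs.
rewrite mulnS (exprD B) [B ^+ 2 * _]mulrC -mulrA.
apply: ler_wpM2l; first by rewrite exprM exprn_ge0 // sqr_ge0.
exact: frame.
Qed.


Lemma phi_sq x (p : seq 'I_J) :
  phi hs Vm lam x p ^+ 2 <= (g%:R)^-1 * vnorm (Phi hs Vm lam x p) ^+ 2.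
Proof.
rewrite /phi; set P := Phi hs Vm lam x p.
have [g0|gpos] := posnP g.
  have -> : (g%:R : R)^-1 = 0 by rewrite g0 invr0.
  by rewrite !mul0r expr0n.
have H := CS (fun _ : 'I_g => 1) (fun v => P v 0).
have E1 : \sum_(i < g) (1 : R) ^+ 2 = g%:R.
  by rewrite (eq_bigr (fun _ => 1)) ?sumr_const ?card_ord // => ? _; rewrite expr1n.
have E2 : \sum_(i < g) 1 * P i 0 = \sum_(i < g) P i 0 by apply: eq_bigr => ? _; rewrite mul1r.
rewrite E1 E2 -vnorm2 in H.
have gR : (0 : R) < g%:R by rewrite ltr0n.
rewrite exprMn.
apply: (@le_trans _ _ ((g%:R)^-1 ^+ 2 * (g%:R * vnorm P ^+ 2))).
  by apply: ler_wpM2l => //; rewrite sqr_ge0.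
rewrite expr2 -mulrA [X in _ * X]mulrA mulVf ?mul1r //.
by rewrite gt_eqF.
Qed.

Lemma gst_bound (x : 'cV[R]_g) : (forall j, `|x j 0| <= 1) ->
  vnorm (gst L hs Vm lam x) ^+ 2 <= \sum_(k < L) B ^+ (2 * k).
Proof.
move=> Hx.
rewrite vnorm2.
have E : \sum_k (gst L hs Vm lam x) k 0 ^+ 2 =
    \sum_(i : 'I_L) \sum_(t : i.-tuple 'I_J) phi hs Vm lam x t ^+ 2.
  under eq_bigr do rewrite mxE.
  rewrite /gdim -(big_enum_val (fun s : pathT J L => phi hs Vm lam x (tval (tagged s)) ^+ 2)).
  rewrite (sig_big_dep (I := 'I_L) predT (fun _ => predT) (fun (i : 'I_L) (t : i.-tuple 'I_J) => phi hs Vm lam x t ^+ 2)).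
  by apply: eq_bigl.
rewrite E.
have Nx : (g%:R)^-1 * vnorm x ^+ 2 <= 1.
  have [g0|gpos] := posnP g.
    have -> : (g%:R : R)^-1 = 0 by rewrite g0 invr0.
    by rewrite mul0r ler01.
  have gR : (0 : R) < g%:R by rewrite ltr0n.
  rewrite mulrC ler_pdivrMr // mul1r vnorm2.
  apply: (@le_trans _ _ (\sum_(j < g) (1 : R))); last by rewrite sumr_const card_ord.
  apply: ler_sum => j _; rewrite -real_normK ?num_real // expr2.
  by apply: mulr_ile1 => //; exact: Hx.
apply: ler_sum => i _.
apply: (@le_trans _ _ (\sum_(t : i.-tuple 'I_J) (g%:R)^-1 * vnorm (Phi hs Vm lam x t) ^+ 2)).
  by apply: ler_sum => t _; exact: phi_sq.
rewrite -mulr_sumr.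
apply: le_trans (ler_wpM2l _ (level_bound i x)) _.
  by rewrite invr_ge0 ler0n.
rewrite mulrCA -[X in _ <= X]mulr1; apply: ler_wpM2l => //.
by rewrite exprM exprn_ge0 // sqr_ge0.
Qed.

End GSTBound.
Section PosDef.
Variables (R : realType) (n d : nat) (Z : 'I_n -> 'cV[R]_d) (c : 'I_n -> R) (mu : R).

Definition Mq : 'M[R]_d :=
  \matrix_(k, m) (\sum_(i < n) c i * Z i k 0 * Z i m 0 + mu * (k == m)%:R).

Lemma uM_entry (u : 'rV[R]_d) m :
  (u *m Mq) 0 m = \sum_i c i * Z i m 0 * (\sum_k u 0 k * Z i k 0) + mu * u 0 m.
Proof.
rewrite mxE.
under eq_bigr do rewrite mxE mulrDr.
rewrite big_split /=; congr (_ + _).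
  under eq_bigr do rewrite mulr_sumr.
  rewrite exchange_big; apply: eq_bigr => i _; rewrite mulr_sumr.
  by apply: eq_bigr => k _; ring.
rewrite (bigD1 m) //= eqxx big1 => [|k /negbTE ->]; first by rewrite addr0 mulr1 mulrC.
by rewrite mulr0 mulr0.
Qed.

Lemma Mv_entry (v : 'cV[R]_d) k :
  (Mq *m v) k 0 = \sum_i c i * Z i k 0 * dot v (Z i) + mu * v k 0.
Proof.
rewrite mxE /dot.
under eq_bigr do rewrite mxE mulrDl.
rewrite big_split /=; congr (_ + _).
  under eq_bigr do rewrite mulr_suml.
  rewrite exchange_big; apply: eq_bigr => i _; rewrite mulr_sumr.
  by apply: eq_bigr => m _; ring.
rewrite (bigD1 k) //= eqxx big1 => [|m]; first by rewrite addr0 mulr1.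
by rewrite eq_sym => /negbTE ->; rewrite mulr0 mul0r.
Qed.

Lemma quad (u : 'rV[R]_d) :
  \sum_m (u *m Mq) 0 m * u 0 m =
  \sum_i c i * (\sum_k u 0 k * Z i k 0) ^+ 2 + mu * \sum_m u 0 m ^+ 2.
Proof.
under eq_bigr do rewrite uM_entry mulrDl.
rewrite big_split /=; congr (_ + _); last first.
  by rewrite mulr_sumr; apply: eq_bigr => m _; ring.
under eq_bigr do rewrite mulr_suml.
rewrite exchange_big; apply: eq_bigr => i _.
rewrite expr2 mulrA mulr_sumr; apply: eq_bigr => m _; ring.
Qed.

Hypothesis c_ge0 : forall i, 0 <= c i.
Hypothesis mu_gt0 : 0 < mu.

Lemma Mq_inj (u : 'rV[R]_d) : u *m Mq = 0 -> u = 0.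
Proof.
move=> H.
have Q := quad u.
rewrite H in Q.
have Q0 : \sum_m (0 : 'rV[R]_d) 0 m * u 0 m = 0.
  by rewrite big1 // => m _; rewrite mxE mul0r.
rewrite Q0 in Q.
have S0 : \sum_m u 0 m ^+ 2 = 0.
  have h1 : 0 <= \sum_i c i * (\sum_k u 0 k * Z i k 0) ^+ 2.
    by apply: sumr_ge0 => i _; apply: mulr_ge0 => //; exact: sqr_ge0.
  have h2 : 0 <= \sum_m u 0 m ^+ 2 by apply: sumr_ge0 => m _; exact: sqr_ge0.
  apply/eqP; rewrite eq_le h2 andbT.
  have : mu * \sum_m u 0 m ^+ 2 <= 0 by lra.
  by rewrite pmulr_rle0.
apply/matrixP => a m; rewrite (ord1 a) mxE.
have := @psumr_eq0P _ _ _ _ (fun i _ => sqr_ge0 (u 0 i)) S0 m isT.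
by move/eqP; rewrite sqrf_eq0 => /eqP.
Qed.

Lemma Mq_unit : Mq \in unitmx.
Proof.
rewrite -row_free_unit -kermx_eq0; apply/eqP.
have KM := mulmx_ker Mq.
apply/matrixP => a b; rewrite mxE.
have : row a (kermx Mq) *m Mq = 0 by rewrite -row_mul KM row0.
move/Mq_inj/matrixP => /(_ 0 b); by rewrite !mxE.
Qed.

End PosDef.
Section Misc.
Variable R : realType.
Lemma le_of_sq (a b : R) : 0 <= a -> 0 <= b -> a ^+ 2 <= b ^+ 2 -> a <= b.
Proof.
move=> a0 b0 H; have := ler_wsqrtr H; by rewrite !sqrtr_sqr !ger0_norm.
Qed.

Lemma dotD d (u w zz : 'cV[R]_d) : dot (u + w) zz = dot u zz + dot w zz.
Proof. by rewrite /dot -big_split; apply: eq_bigr => k _; rewrite mxE mulrDl. Qed.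
End Misc.

Unset Implicit Arguments.
Theorem theorem4p6
  (R : realType) (Y : Type)
  (* GST parameters *)
  (J L : nat) (hs : 'I_J -> R -> R) (A B : R)
  (* training graphs *)
  (n : nat) (g : 'I_n -> nat)
  (S : forall i, 'M[R]_(g i)) (x : forall i, 'cV[R]_(g i)) (y : 'I_n -> Y)
  (* removal requests: fr i = nodes of G_i whose feature is removed,
     nr i = nodes of G_i removed entirely *)
  (fr nr : forall i, {set 'I_(g i)})
  (* eigendecompositions of the shift operators before and after removal *)
  (V : forall i, 'M[R]_(g i)) (lam : forall i, 'rV[R]_(g i))
  (V' : forall i, 'M[R]_(g i)) (lam' : forall i, 'rV[R]_(g i))
  (* loss and its derivatives in s *)
  (l dl ddl : R -> Y -> R) (lambda C1 C2 gamma1 gamma2 : R)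
  (wstar : 'cV[R]_(gdim J L)) :
  let S' := fun i => remove_S (nr i) (S i) in
  let x' := fun i => remove_x (fr i) (nr i) (x i) in
  let z  := fun i => gst L hs (V i) (lam i) (x i) in
  let z' := fun i => gst L hs (V' i) (lam' i) (x' i) in
  let Z' := datamx z' in
  (0 < J)%N -> (0 < L)%N ->
  (forall i, (S i)^T = S i) ->
  (forall i, spec_decomp (S i) (V i) (lam i)) ->
  (forall i, spec_decomp (S' i) (V' i) (lam' i)) ->
  0 < A -> A <= B ->
  (forall i (v : 'cV[R]_(g i)),
      A ^+ 2 * vnorm v ^+ 2
        <= \sum_(j < J) vnorm (wav (hs j) (V i) (lam i) *m v) ^+ 2
      /\ \sum_(j < J) vnorm (wav (hs j) (V i) (lam i) *m v) ^+ 2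
        <= B ^+ 2 * vnorm v ^+ 2) ->
  (forall i (v : 'cV[R]_(g i)),
      A ^+ 2 * vnorm v ^+ 2
        <= \sum_(j < J) vnorm (wav (hs j) (V' i) (lam' i) *m v) ^+ 2
      /\ \sum_(j < J) vnorm (wav (hs j) (V' i) (lam' i) *m v) ^+ 2
        <= B ^+ 2 * vnorm v ^+ 2) ->
  (* l(., y) convex and twice differentiable, with derivatives dl, ddl *)
  (forall yy (a b t : R), 0 <= t <= 1 ->
      l (t * a + (1 - t) * b) yy <= t * l a yy + (1 - t) * l b yy) ->
  (forall yy (s : R), is_derive s 1 (fun t => l t yy) (dl s yy)) ->
  (forall yy (s : R), is_derive s 1 (fun t => dl t yy) (ddl s yy)) ->
  0 < lambda ->
  (* standing assumptions (1)-(5) *)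
  (forall i w, vnorm (grad (fun u => l (dot u (z i)) (y i)) w) <= C1 /\
               vnorm (grad (fun u => l (dot u (z' i)) (y i)) w) <= C1) ->
  (forall i w, `|dl (dot w (z i)) (y i)| <= C2 /\
               `|dl (dot w (z' i)) (y i)| <= C2) ->
  (forall i (a b : R), `|dl a (y i) - dl b (y i)| <= gamma1 * `|a - b|) ->
  (forall i (a b : R), `|ddl a (y i) - ddl b (y i)| <= gamma2 * `|a - b|) ->
  (forall i j, `|x i j 0| <= 1 /\ `|x' i j 0| <= 1) ->
  (* w* minimizes L(., D) *)
  (forall w, Loss l lambda z y wstar <= Loss l lambda z y w) ->
  let Hw := hess (Loss l lambda z' y) wstar in
  let Delta := grad (Loss l lambda z y) wstar - grad (Loss l lambda z' y) wstar in
  let v := invmx Hw *m Delta in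
  let w' := wstar + v in
  let F := Num.sqrt (\sum_(k < L) B ^+ (2 * k)) in
  vnorm (grad (Loss l lambda z' y) w')
    <= gamma2 * F * opnorm Z' * vnorm v * vnorm (Z' *m v).
Proof.
move=> S' x' z z' Z' J0 L0 Ssym specS specS' A0 AB frameS frameS' conv Hdl Hddl lam0
  HC1 HC2 Hg1 Hg2 Hx Hmin.
cbv zeta.
set Hw := hess (Loss l lambda z' y) wstar.
set Delta := grad (Loss l lambda z y) wstar - grad (Loss l lambda z' y) wstar.
set v := invmx Hw *m Delta.
set F := Num.sqrt (\sum_(k < L) B ^+ (2 * k)).
have gradE := grad_Loss lambda y Hdl.
rewrite gradE.
have [n0|npos] := posnP n.
  have Z0 : forall k, Gk dl lambda y z' (wstar + v) k = 0.
    move=> k; rewrite /Gk big1 => [|i]; last by case: i => j hj; exfalso; move: hj; rewrite n0.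
    by rewrite n0 mul0r mul0r addr0.
  have -> : vnorm (Z' *m v) = 0.
    by rewrite /vnorm big1 ?sqrtr0 // => i; case: i => j hj; exfalso; move: hj; rewrite n0.
  rewrite mulr0 /vnorm big1 ?sqrtr0 // => k _.
  by rewrite mxE Z0 expr0n.
have i0 : 'I_n := Ordinal npos.
have g2ge0 : 0 <= gamma2.
  have := Hg2 i0 1 0; rewrite subr0 normr1 mulr1; apply: le_trans; exact: normr_ge0.
pose c := fun i => ddl (dot wstar (z' i)) (y i).
have mupos : 0 < n%:R * lambda by rewrite mulr_gt0 // ltr0n.
have cge0 : forall i, 0 <= c i.
  move=> i; apply: (@ddl_ge0 _ (fun s => dl s (y i)) (fun s => ddl s (y i))).
  move=> a b ab; apply: (@dl_mono _ (fun s => l s (y i))) => //.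
  by move=> a' b' t ht; exact: conv.
have HwE : Hw = Mq z' c (n%:R * lambda) by rewrite /Hw (hess_Loss lambda y Hdl Hddl).
have Hunit : Hw \in unitmx by rewrite HwE; exact: Mq_unit.
have HvD : Hw *m v = Delta by rewrite /v mulmxA mulmxV // mul1mx.
have Gz0 : forall k, Gk dl lambda y z wstar k = 0.
  move=> k; rewrite -(grad_min Hdl Hmin (delta_mx k 0)) /Dl /Gk dot_deltar.
  by congr (_ + _); apply: eq_bigr => i _; rewrite dot_delta.
have DeltaE : forall k, Delta k 0 = - Gk dl lambda y z' wstar k.
  by move=> k; rewrite /Delta !gradE !mxE Gz0 sub0r.
pose r := \col_i (dl (dot wstar (z' i) + dot v (z' i)) (y i)
                 - dl (dot wstar (z' i)) (y i) - c i * dot v (z' i)).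
have gradR : \col_k Gk dl lambda y z' (wstar + v) k = Z'^T *m r.
  apply/matrixP => k j; rewrite (ord1 j) !mxE.
  have Ek : (Hw *m v) k 0 = Delta k 0 by rewrite HvD.
  rewrite HwE Mv_entry DeltaE /Gk in Ek.
  rewrite /Gk.
  under eq_bigr do rewrite dotD.
  have -> : \sum_i Z'^T k i * r i 0 =
     \sum_i dl (dot wstar (z' i) + dot v (z' i)) (y i) * z' i k 0
     - \sum_i dl (dot wstar (z' i)) (y i) * z' i k 0
     - \sum_i c i * z' i k 0 * dot v (z' i).
    rewrite -!sumrB; apply: eq_bigr => i _; rewrite !mxE; ring.
  rewrite mxE; move: Ek.
  set S1 := \sum_i dl (dot wstar (z' i) + dot v (z' i)) (y i) * z' i k 0.
  set S2 := \sum_i dl (dot wstar (z' i)) (y i) * z' i k 0.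
  set S3 := \sum_i c i * z' i k 0 * dot v (z' i).
  move=> Ek; rewrite mulrDr; lra.
rewrite gradR.
apply: le_trans (opnorm_tr Z' r) _.
have Fsq : F ^+ 2 = \sum_(k < L) B ^+ (2 * k).
  rewrite /F sqr_sqrtr // sumr_ge0 // => k _; by rewrite exprM exprn_ge0 // sqr_ge0.
have zb : forall i, vnorm (z' i) ^+ 2 <= F ^+ 2.
  move=> i; rewrite Fsq; apply: gst_bound.
    by move=> u; exact: (frameS' i u).2.
  by move=> j; exact: (Hx i j).2.
have hb : forall i, dot v (z' i) ^+ 2 <= vnorm v ^+ 2 * F ^+ 2.
  move=> i; apply: le_trans (dot_sq _ _) _; apply: ler_wpM2l; [exact: sqr_ge0 | exact: zb].
have rb : forall i, r i 0 ^+ 2 <= (gamma2 * vnorm v * F) ^+ 2 * (Z' *m v) i 0 ^+ 2.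
  move=> i.
  have R1 := remainder (dot wstar (z' i)) (dot v (z' i)) (Hddl (y i)) (Hg2 i).
  have ZvE : (Z' *m v) i 0 = dot v (z' i).
    by rewrite mxE /dot; apply: eq_bigr => k _; rewrite mxE mulrC.
  rewrite ZvE mxE.
  move: R1 (hb i); set h := dot v (z' i).
  set rr := dl (dot wstar (z' i) + h) (y i) - dl (dot wstar (z' i)) (y i) - c i * h.
  move=> R1 hbi.
  apply: (@le_trans _ _ ((gamma2 * h ^+ 2) ^+ 2)).
    rewrite -real_normK ?num_real // !expr2.
    by apply: ler_pM => //; exact: normr_ge0.
  have P := mulr_ge0 (sqr_ge0 gamma2) (sqr_ge0 h).
  rewrite !exprMn.
  have := ler_wpM2l P hbi.
  have -> : gamma2 ^+ 2 * h ^+ 2 * (vnorm v ^+ 2 * F ^+ 2) =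
            gamma2 ^+ 2 * vnorm v ^+ 2 * F ^+ 2 * h ^+ 2 by ring.
  have -> : gamma2 ^+ 2 * (h ^+ 2) ^+ 2 = gamma2 ^+ 2 * h ^+ 2 * h ^+ 2 by ring.
  by [].
have rB : vnorm r <= gamma2 * F * vnorm v * vnorm (Z' *m v).
  have Fge0 : 0 <= F by exact: sqrtr_ge0.
  apply: le_of_sq; first exact: vnorm_ge0.
    by rewrite !mulr_ge0 // vnorm_ge0.
  have -> : (gamma2 * F * vnorm v * vnorm (Z' *m v)) ^+ 2 =
            (gamma2 * vnorm v * F) ^+ 2 * vnorm (Z' *m v) ^+ 2 by ring.
  rewrite !vnorm2 mulr_sumr; apply: ler_sum => i _; exact: rb.
apply: le_trans (ler_wpM2l (opnorm_ge0 Z') rB) _.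
by rewrite le_eqVlt; apply/orP; left; apply/eqP; ring.
Qed.
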